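(* Let $K^n$ ($n\ge3$) be a finite $n$-dimensional pseudomanifold with a reflection $\vartheta$ and associated subcomplexes $K_+,K_-,K_0$, and let $\kappa>0$. If $\underline{w}_\pm\in\mathfrak{C}_\kappa(K_\pm)$ with $\pi_0\underline{w}_+=\pi_0\underline{w}_-$, then the assignment $\underline{w}$ on the edges of $K^n$ that agrees with $\underline{w}_+$ on edges of $K_+$ and with $\underline{w}_-$ on edges of $K_-$ lies in $\mathfrak{C}_\kappa(K^n)$. Moreover $\pi_0$ maps $\mathfrak{C}_\kappa(K^n)$ into $\mathfrak{C}_\kappa(K_0)$.
   Context: A finite simplicial complex is a finite vertex set with a family of nonempty subsets (simplexes) containing singletons and closed under nonempty subsets. An $n$-dimensional pseudomanifold: every simplex is a face of an $n$-simplex, every $(n-1)$-simplex is a face of at most two $n$-simplexes, any two $n$-simplexes are joined by a chain of $n$-simplexes with consecutive ones sharing an $(n-1)$-simplex. For a simplex $\sigma$ with vertices $0,\dots,k$ and edge values $z_{ij}>0$ ($z_{ii}=0$), $A(\underline{z}(\sigma))$ is the $k\times k$ matrix $a_{ij}=\tfrac12(z_{0i}+z_{0j}-z_{ij})$. A reflection is an involutive simplicial automorphism $\vartheta\neq\mathrm{id}$ of $K^n$ with subcomplexes $K_\pm$ that are $n$-dimensional pseudomanifolds, $K_-=\vartheta K_+$, $K_0=K_+\cap K_-$ a nonempty $(n-1)$-dimensional pseudomanifold on which $\vartheta$ is the identity, and every simplex of $K^n$ lies in $K_+$ or $K_-$. $\pi_\pm,\pi_0$ denote restriction of an edge assignment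 to the edges of $K_\pm$, $K_0$; $\underline{z}_\pm=\pi_\pm\underline{z}$; $\|\cdot\|$ is the Euclidean norm. The cut-off set for $K^n$ is $\mathfrak{C}_\kappa(K^n)=\{\underline{z}:\det A(\underline{z}(\sigma))\ge1/\kappa\text{ for all }\sigma\in K^n\text{ with }1\le\dim\sigma\le n,\ \max(\|\underline{z}_+\|,\|\underline{z}_-\|)\le\kappa\}$; for $L\in\{K_+,K_-,K_0\}$ of dimension $m$, $\mathfrak{C}_\kappa(L)=\{\underline{w}:\det A(\underline{w}(\sigma))\ge1/\kappa\text{ for all }\sigma\in L,\ 1\le\dim\sigma\le m,\ \|\underline{w}\|\le\kappa\}$. *)

(* Defs.v *)
From HB Require Import structures.
From mathcomp Require Import all_boot all_order all_algebra.
From mathcomp Require Import reals.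
Set Implicit Arguments. Unset Strict Implicit. Unset Printing Implicit Defensive.
Import Order.TTheory GRing.Theory Num.Theory.
Section Defs.
Variable V : finType.

(* A (finite) simplicial complex is a set of simplices (nonempty vertex sets)
   closed under nonempty subsets. dim sigma = #|sigma| - 1. *)
Definition simplicial_complex (K : {set {set V}}) : Prop :=
  set0 \notin K /\
  forall s t : {set V}, s \in K -> t \subset s -> t != set0 -> t \in K.

Definition adj_nsimp (K : {set {set V}}) (n : nat) : rel {set V} :=
  fun t t' => [&& t \in K, t' \in K, #|t| == n.+1, #|t'| == n.+1 &
                  n <= #|t :&: t'|].

Definition pseudomanifold (n : nat) (K : {set {set V}}) : Prop :=
  simplicial_complex K /\
  (forall s, s \in K -> exists2 t, t \in K & (#|t| == n.+1) && (s \subset t)) /\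
  (forall r, r \in K -> #|r| = n ->
     (#|[set t in K | (#|t| == n.+1) && (r \subset t)]| <= 2)%N) /\
  (forall t t', t \in K -> t' \in K -> #|t| = n.+1 -> #|t'| = n.+1 ->
     connect (adj_nsimp K n) t t').

(* A reflection theta of K (vertex set of K taken to be all of V) with
   subcomplexes Kp = K_+, Km = K_-, K0 = K_0 = Kp :&: Km. *)
Definition reflection (n : nat) (K : {set {set V}}) (theta : V -> V)
    (Kp Km : {set {set V}}) : Prop :=
  (forall v : V, [set v] \in K) /\
  (forall v, theta (theta v) = v) /\
  (forall s, (s \in K) = (theta @: s \in K)) /\
  (exists v, theta v != v) /\
  Kp \subset K /\ Km \subset K /\
  pseudomanifold n Kp /\ pseudomanifold n Km /\
  Km = (fun s : {set V} => theta @: s) @: Kp /\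
  Kp :&: Km != set0 /\
  pseudomanifold n.-1 (Kp :&: Km) /\
  (forall s, s \in Kp :&: Km -> forall v, v \in s -> theta v = v) /\
  K \subset Kp :|: Km.

Variable R : realType.
Local Open Scope ring_scope.

(* Edge assignments are functions on vertex sets; only values on the
   edges (2-element simplices) of the relevant complex matter. *)
Definition ezz (z : {set V} -> R) (u v : V) : R :=
  if u == v then 0 else z [set u; v].

(* A(z(sigma)) for sigma with vertices v0 :: s (k = size s). *)
Definition Amx (z : {set V} -> R) (v0 : V) (s : seq V) : 'M[R]_(size s) :=
  \matrix_(i, j) (2^-1 * (ezz z v0 (nth v0 s i) + ezz z v0 (nth v0 s j)
                          - ezz z (nth v0 s i) (nth v0 s j))).

Definition detA (z : {set V} -> R) (sigma : {set V}) : R :=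
  match enum sigma with
  | v0 :: s => \det (Amx z v0 s)
  | [::] => 1
  end.

Definition enorm (L : {set {set V}}) (z : {set V} -> R) : R :=
  Num.sqrt (\sum_(e in L | #|e| == 2%N) z e ^+ 2).

Definition restr (L : {set {set V}}) (z : {set V} -> R) : {set V} -> R :=
  fun e => if (e \in L) && (#|e| == 2%N) then z e else 0.

Definition cutoff (L : {set {set V}}) (m : nat) (kappa : R) (w : {set V} -> R)
  : Prop :=
  (forall sigma, sigma \in L -> (2 <= #|sigma| <= m.+1)%N ->
     1 / kappa <= detA w sigma) /\
  enorm L w <= kappa.

Definition cutoffK (K Kp Km : {set {set V}}) (n : nat) (kappa : R)
    (z : {set V} -> R) : Prop :=
  (forall sigma, sigma \in K -> (2 <= #|sigma| <= n.+1)%N ->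
     1 / kappa <= detA z sigma) /\
  Num.max (enorm Kp (restr Kp z)) (enorm Km (restr Km z)) <= kappa.

End Defs.

(* Main.v *)
Require Import Defs.
From HB Require Import structures.
From mathcomp Require Import all_boot all_order all_algebra.
From mathcomp Require Import reals.
Import Order.TTheory GRing.Theory Num.Theory.
Local Open Scope ring_scope.

Lemma detA_ext (V : finType) (R : realType) (z1 z2 : {set V} -> R) (sigma : {set V}) :
  (forall u v, u \in sigma -> v \in sigma -> u != v -> z1 [set u; v] = z2 [set u; v]) ->
  detA z1 sigma = detA z2 sigma.
Proof.
move=> H; rewrite /detA.
have Hm : forall x, x \in enum sigma -> x \in sigma by move=> x; rewrite mem_enum.
case: (enum sigma) Hm => [//|v0 s] Hm.
have Hin : forall i : 'I_(size s), nth v0 s i \in sigma.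
  by move=> i; apply: Hm; rewrite inE mem_nth ?orbT.
have H0 : v0 \in sigma by apply: Hm; rewrite inE eqxx.
have E : forall a b, a \in sigma -> b \in sigma -> ezz z1 a b = ezz z2 a b.
  by move=> a b Ha Hb; rewrite /ezz; case: eqP => // /eqP ab; apply: H.
congr (\det _); apply/matrixP => i j; rewrite !mxE.
by rewrite !E ?Hin.
Qed.

Lemma edge_in (V : finType) (K : {set {set V}}) sigma u v :
  simplicial_complex K -> sigma \in K -> u \in sigma -> v \in sigma ->
  [set u; v] \in K.
Proof.
move=> [_ HK] Hs Hu Hv; apply: (HK _ _ Hs).
  by apply/subsetP => x; rewrite !inE => /orP [] /eqP ->.
by apply/set0Pn; exists u; rewrite !inE eqxx.
Qed.

Theorem lemmaA2 (V : finType) (R : realType) (n : nat)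
    (K Kp Km : {set {set V}}) (theta : V -> V) (kappa : R) :
  (3 <= n)%N ->
  pseudomanifold n K ->
  reflection n K theta Kp Km ->
  0 < kappa ->
  (forall wp wm : {set V} -> R,
     cutoff Kp n kappa (restr Kp wp) ->
     cutoff Km n kappa (restr Km wm) ->
     restr (Kp :&: Km) wp = restr (Kp :&: Km) wm ->
     forall w : {set V} -> R,
       (forall e, e \in Kp -> #|e| = 2%N -> w e = wp e) ->
       (forall e, e \in Km -> #|e| = 2%N -> w e = wm e) ->
       cutoffK K Kp Km n kappa (restr K w)) /\
  (forall z : {set V} -> R,
     cutoffK K Kp Km n kappa (restr K z) ->
     cutoff (Kp :&: Km) n.-1 kappa (restr (Kp :&: Km) z)).
Proof.
move=> _ _ [_ [_ [_ [_ [sKp [sKm [[scp _] [[scm _] [_ [_ [[sc0 _] [_ sK]]]]]]]]]]]] _.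
split.
- move=> wp wm [dp np] [dm nm] _ w Ep Em; split.
  + move=> sigma Hs Hc.
    have := subsetP sK _ Hs; rewrite inE => /orP [] Hi.
    * rewrite (@detA_ext _ _ _ (restr Kp wp)); first exact: dp.
      move=> u v Hu Hv uv; have He := @edge_in _ _ _ _ _ scp Hi Hu Hv.
      have Hc2 : #|[set u; v]| = 2%N by rewrite cards2 uv.
      by rewrite /restr He (subsetP sKp _ He) Hc2 eqxx /= Ep.
    * rewrite (@detA_ext _ _ _ (restr Km wm)); first exact: dm.
      move=> u v Hu Hv uv; have He := @edge_in _ _ _ _ _ scm Hi Hu Hv.
      have Hc2 : #|[set u; v]| = 2%N by rewrite cards2 uv.
      by rewrite /restr He (subsetP sKm _ He) Hc2 eqxx /= Em.
  + rewrite ge_max; apply/andP; split.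
    * apply: le_trans np; rewrite /enorm le_eqVlt; apply/orP; left; apply/eqP.
      congr Num.sqrt; apply: eq_bigr => e /andP [He /eqP Hc].
      by rewrite /restr He (subsetP sKp _ He) Hc eqxx /= Ep.
    * apply: le_trans nm; rewrite /enorm le_eqVlt; apply/orP; left; apply/eqP.
      congr Num.sqrt; apply: eq_bigr => e /andP [He /eqP Hc].
      by rewrite /restr He (subsetP sKm _ He) Hc eqxx /= Em.
- move=> z [dz nz]; split.
  + move=> sigma Hs Hc.
    have HsK : sigma \in K by apply: (subsetP sKp); move: Hs; rewrite inE => /andP [].
    rewrite (@detA_ext _ _ _ (restr K z)); first apply: dz => //.
      by case/andP: Hc => -> h; apply: leq_trans h _; apply: leq_trans (leq_pred n) _.
    move=> u v Hu Hv uv; have He := @edge_in _ _ _ _ _ sc0 Hs Hu Hv.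
    have HeK : [set u; v] \in K by apply: (subsetP sKp); move: He; rewrite inE => /andP [].
    have Hc2 : #|[set u; v]| = 2%N by rewrite cards2 uv.
    by rewrite /restr He HeK Hc2 eqxx.
  + apply: le_trans nz; rewrite le_max; apply/orP; left.
    rewrite /enorm; apply: ler_wsqrtr.
    rewrite [X in X <= _]big_mkcond [X in _ <= X]big_mkcond /=.
    apply: ler_sum => e _.
    rewrite /restr; case He0: (e \in Kp :&: Km) => /=; last first.
      by case: ifP => // _; rewrite sqr_ge0.
    move: (He0); rewrite inE => /andP [He _].
    rewrite He (subsetP sKp _ He) /=.
    by case: (#|e| == 2%N) => //=; rewrite He0.
Qed.
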